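(* A POMDP $\Lambda=(Q,A,\delta,\Omega,O)$ has non-increasing entropy if and only if it is Dirac-preserving.
   Context: A POMDP is $\Lambda=(Q,A,\delta,\Omega,O)$ where $(Q,A,\delta)$ is an MDP ($Q,A$ finite non-empty, $\delta:Q\times A\to\mathcal D(Q)$), $\Omega$ a finite non-empty set of observations and $O:Q\to\Omega$. A belief is $b\in\mathcal D(Q)$; a state $q$ is identified with the Dirac belief on $q$. For $b\in\mathcal D(Q)$, $a\in A$, $o\in\Omega$: $p(b,a,o):=\sum_{q: O(q)=o}\sum_{q'\in Q}b(q')\delta(q',a)(q)$; $\mathrm{Comp}(b,a):=\{o: p(b,a,o)>0\}$; for $o\in\mathrm{Comp}(b,a)$, $\lambda[b,a,o](q):=0$ if $O(q)\ne o$ and $\lambda[b,a,o](q):=\sum_{q'}b(q')\delta(q',a)(q)/p(b,a,o)$ otherwise. $\Lambda$ is Dirac-preserving if for all $q\in Q$, $a\in A$, $o\in\mathrm{Comp}(q,a)$, $|\mathrm{Supp}(\lambda[q,a,o])|=1$. The entropy of $b$ is $H(b):=-\sum_q b(q)\log_2 b(q)$ (with $0\log 0=0$). $\Lambda$ has non-increasing entropy if for all $b\in\mathcal D(Q)$ and $a\in A$: $H(b)\ge\sum_{o\in\mathrm{Comp}(b,a)}p(b,a,o)\,H(\lambda[b,a,o])$. *)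

(* Defs.v *)
From mathcomp Require Import all_boot all_order all_algebra.
From mathcomp Require Import all_classical all_reals all_analysis.
Set Implicit Arguments. Unset Strict Implicit. Unset Printing Implicit Defensive.
Import Order.TTheory GRing.Theory Num.Theory.
Local Open Scope ring_scope.

Section POMDP.
Variables (R : realType) (Q A Omega : finType).

Definition is_dist (b : Q -> R) : Prop :=
  (forall q, 0 <= b q) /\ \sum_(q : Q) b q = 1.

Definition dirac (q : Q) : Q -> R := fun x => (x == q)%:R.

Definition pobs (delta : Q -> A -> Q -> R) (O : Q -> Omega)
  (b : Q -> R) (a : A) (o : Omega) : R :=
  \sum_(q : Q | O q == o) \sum_(q' : Q) b q' * delta q' a q.

Definition compat (delta : Q -> A -> Q -> R) (O : Q -> Omega)
  (b : Q -> R) (a : A) (o : Omega) : bool :=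
  0 < pobs delta O b a o.

Definition bupdate (delta : Q -> A -> Q -> R) (O : Q -> Omega)
  (b : Q -> R) (a : A) (o : Omega) : Q -> R :=
  fun q => if O q == o then (\sum_(q' : Q) b q' * delta q' a q) / pobs delta O b a o
           else 0.

Definition dirac_preserving (delta : Q -> A -> Q -> R) (O : Q -> Omega) : Prop :=
  forall (q : Q) (a : A) (o : Omega), compat delta O (dirac q) a o ->
    #|[set q' : Q | bupdate delta O (dirac q) a o q' != 0]| = 1%N.

Definition log2 (x : R) : R := ln x / ln 2.

Definition entropy (b : Q -> R) : R :=
  - \sum_(q : Q) (if b q == 0 then 0 else b q * log2 (b q)).

Definition nonincreasing_entropy (delta : Q -> A -> Q -> R) (O : Q -> Omega) : Prop :=
  forall (b : Q -> R) (a : A), is_dist b ->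
    \sum_(o : Omega | compat delta O b a o)
        pobs delta O b a o * entropy (bupdate delta O b a o)
    <= entropy b.

End POMDP.

(* Main.v *)
Require Import Defs.
From mathcomp Require Import all_boot all_order all_algebra.
From mathcomp Require Import all_classical all_reals all_analysis.
From mathcomp Require Import lra.
Import Order.TTheory GRing.Theory Num.Theory.
Local Open Scope ring_scope.

Definition nlog {R : realType} (x : R) : R := if x == 0 then 0 else x * ln x.

Lemma ln2_gt0 (R : realType) : 0 < ln (2 : R).
Proof. by apply: ln_gt0; lra. Qed.

Lemma entropyE (R : realType) (Q : finType) (b : Q -> R) :
  entropy b = - (\sum_q nlog (b q)) / ln 2.
Proof.
rewrite /entropy /log2 mulNr mulr_suml; congr (- _); apply: eq_bigr => q _.
by rewrite /nlog; case: ifP => _; [rewrite mul0r | rewrite mulrA].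
Qed.

Lemma single_le {R : realType} {Q : finType} (P : pred Q) (f : Q -> R) q0 :
  (forall q, 0 <= f q) -> P q0 -> f q0 <= \sum_(q | P q) f q.
Proof. by move=> f0 Pq0; rewrite (bigD1 q0) //= lerDl sumr_ge0. Qed.

Lemma part {R : realType} {Q Omega : finType} (O : Q -> Omega) (F : Q -> R) :
  \sum_q F q = \sum_o \sum_(q | O q == o) F q.
Proof. by rewrite (partition_big O xpredT). Qed.

Lemma nlog_le0 {R : realType} (x : R) : 0 <= x <= 1 -> nlog x <= 0.
Proof.
move=> /andP [x0 x1]; rewrite /nlog; case: ifP => // _.
by rewrite mulr_ge0_le0 // ln_le0.
Qed.

Lemma nlog_lt0 {R : realType} (x : R) : 0 < x < 1 -> nlog x < 0.
Proof.
move=> H; have /andP [x0 x1] := H; rewrite /nlog gt_eqF //.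
by rewrite pmulr_rlt0 // ln_lt0.
Qed.

Lemma ent_ge0 (R : realType) (Q : finType) (f : Q -> R) :
  (forall q, 0 <= f q <= 1) -> 0 <= entropy f.
Proof.
move=> H; rewrite entropyE mulNr oppr_ge0 mulr_le0_ge0 //.
  by apply: sumr_le0 => q _; apply: nlog_le0.
by rewrite invr_ge0 ltW // ln2_gt0.
Qed.

Lemma ent_gt0 (R : realType) (Q : finType) (f : Q -> R) q0 :
  (forall q, 0 <= f q <= 1) -> 0 < f q0 < 1 -> 0 < entropy f.
Proof.
move=> H H0; rewrite entropyE mulNr oppr_gt0 mulrC pmulr_rlt0 ?invr_gt0 ?ln2_gt0 //.
rewrite (bigD1 q0) //=.
have := ltr_leD (nlog_lt0 _ H0) (sumr_le0 _ (fun q (_ : q != q0) => nlog_le0 _ (H q))).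
by rewrite addr0.
Qed.

Lemma pobs_dirac (R : realType) (Q A Omega : finType) (delta : Q -> A -> Q -> R)
  (O : Q -> Omega) q a o :
  pobs delta O (@Defs.dirac R Q q) a o = \sum_(q3 | O q3 == o) delta q a q3.
Proof.
apply: eq_bigr => q3 _; rewrite (bigD1 q) //= /Defs.dirac eqxx mul1r big1 ?addr0 //.
by move=> q4 /negbTE ->; rewrite mul0r.
Qed.

Lemma bupd_ge0 {R : realType} {Q A Omega : finType} {delta : Q -> A -> Q -> R}
  {O : Q -> Omega} {b a o} :
  (forall q, 0 <= b q) -> (forall q x, 0 <= delta q a x) ->
  compat delta O b a o -> forall x, 0 <= bupdate delta O b a o x.
Proof.
move=> b0 d0 comp x; rewrite /bupdate; case: ifP => // _.
apply: divr_ge0; last exact: ltW.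
by apply: sumr_ge0 => y _; rewrite mulr_ge0.
Qed.

Lemma bupd_sum {R : realType} {Q A Omega : finType} {delta : Q -> A -> Q -> R}
  {O : Q -> Omega} {b a o} :
  compat delta O b a o -> \sum_x bupdate delta O b a o x = 1.
Proof.
move=> comp; rewrite /bupdate -big_mkcond /= -mulr_suml.
by rewrite divff // gt_eqF.
Qed.

Lemma dirac_conc (R : realType) (Q A Omega : finType) (delta : Q -> A -> Q -> R)
  (O : Q -> Omega) :
  (forall (q : Q) (a : A), is_dist (delta q a)) -> dirac_preserving delta O ->
  forall q a x, delta q a x != 0 ->
  delta q a x = \sum_(x3 | O x3 == O x) delta q a x3.
Proof.
move=> Hdist Hdp q a x nz.
have d0 : forall y, 0 <= delta q a y by case: (Hdist q a).
have dpos : 0 < delta q a x by rewrite lt0r nz d0.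
have Ppos : 0 < \sum_(x3 | O x3 == O x) delta q a x3.
  exact: (lt_le_trans dpos (single_le (fun y => O y == O x) _ _ d0 (eqxx (O x)))).
have comp : compat delta O (@Defs.dirac R Q q) a (O x) by rewrite /compat pobs_dirac.
move: (Hdp q a (O x) comp) => /eqP /cards1P [z Hz].
have inS : forall y, O y == O x -> delta q a y != 0 ->
    y \in [set q' | bupdate delta O (@Defs.dirac R Q q) a (O x) q' != 0].
  move=> y Oy ny; rewrite inE /bupdate Oy.
  have -> : \sum_q' @Defs.dirac R Q q q' * delta q' a y = delta q a y.
    rewrite (bigD1 q) //= /Defs.dirac eqxx mul1r big1 ?addr0 //.
    by move=> q4 /negbTE ->; rewrite mul0r.
  by rewrite pobs_dirac mulf_neq0 // invr_neq0 // gt_eqF.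
have := inS x (eqxx _) nz; rewrite Hz => /set1P xz; subst z.
rewrite (bigD1 x) //= big1 ?addr0 // => y /andP [Oy ne].
apply/eqP; apply: contraR ne => ny.
by have := inS y Oy ny; rewrite Hz => /set1P ->.
Qed.

Lemma core (R : realType) (Q A Omega : finType) (delta : Q -> A -> Q -> R)
  (O : Q -> Omega) :
  (forall (q : Q) (a : A), is_dist (delta q a)) -> dirac_preserving delta O ->
  forall b a, is_dist b ->
  \sum_q nlog (b q) <= \sum_(o | compat delta O b a o)
      pobs delta O b a o * \sum_x nlog (bupdate delta O b a o x).
Proof.
move=> Hdist Hdp b a [b0 b1].
have d0 : forall q x, 0 <= delta q a x by move=> q x; case: (Hdist q a).
have d1 : forall q, \sum_x delta q a x = 1 by move=> q; case: (Hdist q a).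
set p := pobs delta O b a.
have w0 : forall x y, 0 <= b y * delta y a x by move=> x y; rewrite mulr_ge0.
have p0 : forall o, 0 <= p o.
  by move=> o; apply: sumr_ge0 => x _; apply: sumr_ge0 => y _.
have psum : \sum_o p o = 1.
  rewrite /p /pobs -(part O (fun x => \sum_y b y * delta y a x)) exchange_big /=.
  rewrite -b1; apply: eq_bigr => y _; by rewrite -mulr_sumr d1 mulr1.
have wle : forall x y, b y * delta y a x <= p (O x).
  move=> x y; apply: le_trans (single_le (fun y => true) _ y (w0 x) isT) _.
  exact: (single_le (fun z => O z == O x) (fun z => \sum_y b y * delta y a z) x
      (fun z => sumr_ge0 _ (fun y _ => w0 z y)) (eqxx _)).
pose T := fun x => \sum_y (if b y * delta y a x == 0 then 0
            else b y * delta y a x * ln (b y * delta y a x / p (O x))).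
have stepB : \sum_q nlog (b q) <= \sum_x T x.
  rewrite /T exchange_big /=; apply: ler_sum => y _.
  have [by0|bynz] := eqVneq (b y) 0.
    rewrite /nlog by0 eqxx big1 // => x _; by rewrite mul0r eqxx.
  have bpos : 0 < b y by rewrite lt0r bynz b0.
  pose G := fun o => p o / \sum_(x | O x == o) delta y a x.
  have claim : forall x, b y * delta y a x * ln (b y) +
        b y * (delta y a x - delta y a x * G (O x)) <=
      (if b y * delta y a x == 0 then 0
       else b y * delta y a x * ln (b y * delta y a x / p (O x))).
    move=> x; have [dx0|dxnz] := eqVneq (delta y a x) 0.
      by rewrite dx0 !mulr0 !mul0r eqxx subrr mulr0 addr0.
    have dpos : 0 < delta y a x by rewrite lt0r dxnz d0.
    have wpos : 0 < b y * delta y a x by rewrite mulr_gt0.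
    have ppos : 0 < p (O x) := lt_le_trans wpos (wle x y).
    rewrite (gt_eqF wpos) /G -(@dirac_conc _ _ _ _ _ _ Hdist Hdp _ _ _ dxnz).
    rewrite -[b y * delta y a x / p (O x)]mulrA lnM ?posrE ?divr_gt0 //.
    rewrite [delta y a x * (_ / _)]mulrCA divff // mulr1 [X in _ <= X]mulrDr lerD2l -mulrA.
    apply: ler_wpM2l; first exact: ltW.
    have pd : 0 < p (O x) / delta y a x by rewrite divr_gt0.
    have h := @le_ln1Dx R (p (O x) / delta y a x - 1) ltac:(lra).
    rewrite addrC subrK in h.
    have e : ln (delta y a x / p (O x)) = - ln (p (O x) / delta y a x).
      by rewrite -lnV ?posrE // invf_div.
    rewrite e mulrN.
    have := ler_wpM2l (ltW dpos) h.
    rewrite mulrBr mulrCA divff ?gt_eqF // !mulr1 => h2; lra.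
  apply: (le_trans _ (ler_sum _ (fun x _ => claim x))); rewrite big_split /=.
  rewrite -mulr_suml -mulr_sumr d1 mulr1 /nlog (negbTE bynz) lerDl.
  rewrite -mulr_sumr; apply: mulr_ge0; first exact: ltW.
  rewrite sumrB d1 subr_ge0.
  rewrite (part O) -psum; apply: ler_sum => o _.
  rewrite (eq_bigr (fun x => delta y a x * G o)); last by move=> x /eqP ->.
  rewrite -mulr_suml /G.
  have [P0|Pnz] := eqVneq (\sum_(x | O x == o) delta y a x) 0.
    by rewrite P0 mul0r.
  by rewrite mulrCA divff // mulr1.
have stepA : \sum_x T x <= \sum_(o | compat delta O b a o)
      p o * \sum_x nlog (bupdate delta O b a o x).
  rewrite (part O T) [X in _ <= X]big_mkcond /=; apply: ler_sum => o _.
  case: ifP => [comp|ncomp].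
  - have ppos : 0 < p o := comp.
    rewrite mulr_sumr [X in _ <= X](bigID (fun x => O x == o)) /=.
    rewrite [X in _ <= _ + X]big1 ?addr0; last first.
      by move=> x /negbTE Ox; rewrite /bupdate Ox /nlog eqxx mulr0.
    apply: ler_sum => x /eqP Ox; rewrite /bupdate /T Ox eqxx -/p.
    set mx := \sum_y b y * delta y a x.
    have mxE : mx = \sum_y b y * delta y a x by [].
    have [Mx0|Mxnz] := eqVneq mx 0.
      rewrite Mx0 mul0r /nlog eqxx mulr0 big1 // => y _.
      have -> : b y * delta y a x = 0.
        exact: (psumr_eq0P (fun z _ => w0 x z) Mx0).
      by rewrite eqxx.
    have mxpos : 0 < mx by rewrite lt0r Mxnz sumr_ge0.
    rewrite /nlog (gt_eqF (divr_gt0 mxpos ppos)) mulrA.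
    rewrite [p o * (_ / _)]mulrCA divff ?gt_eqF // mulr1.
    rewrite {1}mxE mulr_suml; apply: ler_sum => y _.
    case: ifP => [/eqP ->|wnz]; first by rewrite mul0r.
    have wpos : 0 < b y * delta y a x by rewrite lt0r wnz w0.
    apply: ler_wpM2l; first exact: ltW.
    rewrite ler_ln ?posrE ?divr_gt0 // ler_pM2r ?invr_gt0 //.
    exact: (single_le (fun y => true) _ y (w0 x) isT).
  - have p0' : p o = 0.
      by apply/eqP; rewrite eq_le p0 andbT leNgt; move: ncomp; rewrite /compat -/p => ->.
    rewrite big1 // => x /eqP Ox; rewrite /T Ox p0' invr0 big1 // => y _.
    by case: ifP => // _; rewrite mulr0 ln0 // mulr0.
exact: le_trans stepB stepA.
Qed.

Lemma dist_dirac (R : realType) (Q : finType) (q : Q) : is_dist (@Defs.dirac R Q q).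
Proof.
split; first by move=> x; rewrite /Defs.dirac ler0n.
rewrite (bigD1 q) //= /Defs.dirac eqxx big1 ?addr0 //.
by move=> x /negbTE ->.
Qed.

Lemma ent_dirac (R : realType) (Q : finType) (q : Q) : entropy (@Defs.dirac R Q q) = 0.
Proof.
rewrite /entropy big1 ?oppr0 // => x _; rewrite /Defs.dirac.
by case: (x == q); rewrite ?eqxx // oner_eq0 /log2 ln1 mul0r mulr0.
Qed.

Lemma bupd_01 {R : realType} {Q A Omega : finType} {delta : Q -> A -> Q -> R}
  {O : Q -> Omega} {b a o} :
  (forall q, 0 <= b q) -> (forall q x, 0 <= delta q a x) ->
  compat delta O b a o -> forall x, 0 <= bupdate delta O b a o x <= 1.
Proof.
move=> b0 d0 comp x; rewrite bupd_ge0 //=.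
rewrite -(bupd_sum comp); exact: (single_le (fun _ => true) _ x (bupd_ge0 b0 d0 comp) isT).
Qed.

Lemma dir1 (R : realType) (Q A Omega : finType) (delta : Q -> A -> Q -> R)
  (O : Q -> Omega) :
  (forall (q : Q) (a : A), is_dist (delta q a)) ->
  nonincreasing_entropy delta O -> dirac_preserving delta O.
Proof.
move=> Hdist Hne q a o comp; apply/eqP; apply/negPn/negP => Hc.
have d0 : forall q x, 0 <= delta q a x by move=> q' x; case: (Hdist q' a).
have b0 : forall x, 0 <= @Defs.dirac R Q q x by case: (dist_dirac R Q q).
set u := bupdate delta O (@Defs.dirac R Q q) a o.
have u0 : forall x, 0 <= u x := bupd_ge0 b0 d0 comp.
have usum : \sum_x u x = 1 := bupd_sum comp.
have u01 : forall x, 0 <= u x <= 1 := bupd_01 b0 d0 comp.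
have : (1 < #|[set x | u x != 0%R]|)%N.
  rewrite ltn_neqAle eq_sym Hc /= card_gt0; apply/set0Pn.
  case: (boolP [exists x, u x != 0]) => [/existsP [x ux]|/existsPn H].
    by exists x; rewrite inE.
  exfalso; move: usum; rewrite big1 => [/eqP|x _]; first by rewrite eq_sym oner_eq0.
  by apply/eqP; move: (H x); rewrite negbK.
move/card_gt1P => [x [y [xS yS xy]]]; rewrite !inE in xS yS.
have uxpos : 0 < u x by rewrite lt0r xS u0.
have uypos : 0 < u y by rewrite lt0r yS u0.
have h1 := single_le (fun z => z != y) _ x u0 xy.
have h2 : \sum_z u z = u y + \sum_(z | z != y) u z by rewrite (bigD1 y).
have ux1 : 0 < u x < 1 by apply/andP; split => //; lra.
have epos := @ent_gt0 _ _ u x u01 ux1.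
have := Hne (@Defs.dirac R Q q) a (dist_dirac R Q q).
rewrite ent_dirac (bigD1 o) //= -/u.
have rest : 0 <= \sum_(o' | compat delta O (@Defs.dirac R Q q) a o' && (o' != o))
   pobs delta O (@Defs.dirac R Q q) a o' * entropy (bupdate delta O (@Defs.dirac R Q q) a o').
  apply: sumr_ge0 => o' /andP [c' _]; apply: mulr_ge0; first exact: ltW.
  exact: ent_ge0 (bupd_01 b0 d0 c').
have := mulr_gt0 comp epos; lra.
Qed.

Theorem mainTheorem10 (R : realType) (Q A Omega : finType)
  (delta : Q -> A -> Q -> R) (O : Q -> Omega) :
  (0 < #|Q|)%N -> (0 < #|A|)%N -> (0 < #|Omega|)%N ->
  (forall (q : Q) (a : A), is_dist (delta q a)) ->
  (nonincreasing_entropy delta O <-> dirac_preserving delta O).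
Proof.
move=> _ _ _ Hdist; split; first exact: dir1.
move=> Hdp b a Hb.
have H := @core _ _ _ _ _ _ Hdist Hdp b a Hb.
rewrite entropyE.
rewrite (eq_bigr (fun o => (- (pobs delta O b a o *
    \sum_x nlog (bupdate delta O b a o x))) / ln 2)); last first.
  by move=> o _; rewrite entropyE !mulNr mulrN mulrA.
rewrite -mulr_suml sumrN ler_pM2r ?invr_gt0 ?ln2_gt0 // lerN2.
exact: H.
Qed.
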